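(* Let $T>0$, $\mu>0$, and consider a partition of $[0,T]$ with mesh-size $h$ satisfying $$h\le\frac{\pi^2}{\sqrt2\,(2+\sqrt\mu\,T)\,\mu\,T}.$$ Then for all $u_h\in V^h_{0,*}$, $$\frac{2\pi^2}{(2+\sqrt\mu T)^2(\pi^2+4\mu T^2)}\,|u_h|_{H^1(0,T)}\le\sup_{0\ne v_h\in V^h_{0,*}}\frac{a(u_h,\overline{\mathcal H}_Tv_h)}{|v_h|_{H^1(0,T)}}.$$
   Context: $H^1_{0,*}(0,T)=\{u\in H^1(0,T):u(0)=0\}$, $H^1_{*,0}(0,T)=\{v\in H^1(0,T):v(T)=0\}$, with the norm $|u|_{H^1(0,T)}=\|\partial_tu\|_{L^2(0,T)}$. The bilinear form is $a(u,v):=-\langle\partial_tu,\partial_tv\rangle_{L^2(0,T)}+\mu\langle u,v\rangle_{L^2(0,T)}$ for $u\in H^1_{0,*}$, $v\in H^1_{*,0}$, and $(\overline{\mathcal H}_Tv)(t):=v(T)-v(t)$. For a partition $0=\eta_0<\dots<\eta_{l+1}=T$ with $h=\max_i(\eta_{i+1}-\eta_i)$, $S^2_h$ is the space of $C^1([0,T])$ functions that are polynomials of degree $\le2$ on each $[\eta_i,\eta_{i+1}]$, and $V^h_{0,*}:=\{v_h\in S^2_h:v_h(0)=0\}$. *)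

(* Defs.v *)
From Stdlib Require Import Reals Lra List.
From Coquelicot Require Import Coquelicot.
Open Scope R_scope.

Definition is_partition (T : R) (l : nat) (eta : nat -> R) : Prop :=
  eta 0%nat = 0 /\ eta (S l) = T /\ (forall i, (i <= l)%nat -> eta i < eta (S i)).

Definition mesh (l : nat) (eta : nat -> R) : R :=
  fold_right Rmax 0 (map (fun i => eta (S i) - eta i) (seq 0 (S l))).

Definition C1_on (a b : R) (v : R -> R) : Prop :=
  exists dv : R -> R,
    (forall t, a <= t <= b -> forall eps, 0 < eps -> exists delta, 0 < delta /\
       forall s, a <= s <= b -> Rabs (s - t) < delta ->
         Rabs (v s - v t - dv t * (s - t)) <= eps * Rabs (s - t)) /\
    (forall t, a <= t <= b -> forall eps, 0 < eps -> exists delta, 0 < delta /\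
       forall s, a <= s <= b -> Rabs (s - t) < delta -> Rabs (dv s - dv t) < eps).

Definition S2h (T : R) (l : nat) (eta : nat -> R) (v : R -> R) : Prop :=
  C1_on 0 T v /\
  (forall i, (i <= l)%nat -> exists a b c : R,
     forall t, eta i <= t <= eta (S i) -> v t = a + b * t + c * t ^ 2).

Definition Vh0 (T : R) (l : nat) (eta : nat -> R) (v : R -> R) : Prop :=
  S2h T l eta v /\ v 0 = 0.

Definition L2inner (T : R) (f g : R -> R) : R := RInt (fun t => f t * g t) 0 T.

Definition H1semi (T : R) (u : R -> R) : R :=
  sqrt (L2inner T (Derive u) (Derive u)).

Definition bform (T mu : R) (u v : R -> R) : R :=
  - L2inner T (Derive u) (Derive v) + mu * L2inner T u v.

Definition HbarT (T : R) (v : R -> R) : R -> R := fun t => v T - v t.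

Definition infsup_quotients (T mu : R) (l : nat) (eta : nat -> R) (u : R -> R) : R -> Prop :=
  fun q => exists v : R -> R, Vh0 T l eta v /\ (exists t, 0 <= t <= T /\ v t <> 0) /\
     q = bform T mu u (HbarT T v) / H1semi T v.

(* Main.v *)
Require Import Defs.
From Stdlib Require Import Reals Lra Lia List Psatz.
From Coquelicot Require Import Coquelicot.
Open Scope R_scope.

Lemma Rc_plus (f g : R -> R) x : continuous f x -> continuous g x -> continuous (fun t => f t + g t) x.
Proof. apply (continuous_plus f g). Qed.
Lemma Rc_minus (f g : R -> R) x : continuous f x -> continuous g x -> continuous (fun t => f t - g t) x.
Proof. apply (continuous_minus f g). Qed.
Lemma Rc_mult (f g : R -> R) x : continuous f x -> continuous g x -> continuous (fun t => f t * g t) x.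
Proof. apply (continuous_mult f g). Qed.
Lemma Rc_opp (f : R -> R) x : continuous f x -> continuous (fun t => - f t) x.
Proof. apply (continuous_opp f). Qed.
Lemma Rc_const (c x : R) : continuous (fun _ => c) x.
Proof. apply continuous_const. Qed.
Lemma Rc_id (x : R) : continuous (fun t => t) x.
Proof. apply continuous_id. Qed.



Lemma Rd_plus (f g : R -> R) x df dg : is_derive f x df -> is_derive g x dg ->
  is_derive (fun t => f t + g t) x (df + dg).
Proof. apply (is_derive_plus f g). Qed.
Lemma Rd_minus (f g : R -> R) x df dg : is_derive f x df -> is_derive g x dg ->
  is_derive (fun t => f t - g t) x (df - dg).
Proof. apply (is_derive_minus f g). Qed.
Lemma Rd_mult (f g : R -> R) x df dg : is_derive f x df -> is_derive g x dg ->
  is_derive (fun t => f t * g t) x (df * g x + f x * dg).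
Proof. intros H1 H2. apply (is_derive_mult f g); auto. intros; apply Rmult_comm. Qed.
Lemma Rd_const (c x : R) : is_derive (fun _ => c) x 0.
Proof. apply (is_derive_const c x). Qed.
Lemma Rd_id (x : R) : is_derive (fun t => t) x 1.
Proof. apply (is_derive_id x). Qed.
Lemma Rd_opp (f : R -> R) x df : is_derive f x df -> is_derive (fun t => - f t) x (- df).
Proof. apply (is_derive_opp f). Qed.

Lemma Rd_eq (f : R -> R) (x l l' : R) : is_derive f x l -> l = l' -> is_derive f x l'.
Proof. intros; subst; auto. Qed.

Lemma Rd_minus_c (c x : R) : is_derive (Rminus c) x (0 - 1).
Proof. apply (Rd_minus (fun _ => c) (fun t => t)); [apply Rd_const|apply Rd_id]. Qed.
Lemma Rd_plus_c (c x : R) : is_derive (Rplus c) x (0 + 1).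
Proof. apply (Rd_plus (fun _ => c) (fun t => t)); [apply Rd_const|apply Rd_id]. Qed.
Lemma Rd_mult_c (c x : R) : is_derive (Rmult c) x (0 * x + c * 1).
Proof. apply (Rd_mult (fun _ => c) (fun t => t)); [apply Rd_const|apply Rd_id]. Qed.
Lemma Rc_minus_c (c x : R) : continuous (Rminus c) x.
Proof. apply (Rc_minus (fun _ => c) (fun t => t)); [apply Rc_const|apply Rc_id]. Qed.
Lemma Rc_plus_c (c x : R) : continuous (Rplus c) x.
Proof. apply (Rc_plus (fun _ => c) (fun t => t)); [apply Rc_const|apply Rc_id]. Qed.
Lemma Rc_mult_c (c x : R) : continuous (Rmult c) x.
Proof. apply (Rc_mult (fun _ => c) (fun t => t)); [apply Rc_const|apply Rc_id]. Qed.

Ltac cont1 := match goal with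
 | |- continuous (Rminus ?c) _ => apply Rc_minus_c
 | |- continuous (Rplus ?c) _ => apply Rc_plus_c
 | |- continuous (Rmult ?c) _ => apply Rc_mult_c
 | |- continuous (fun t => _ + _) _ => apply Rc_plus
 | |- continuous (fun t => _ - _) _ => apply Rc_minus
 | |- continuous (fun t => _ * _) _ => apply Rc_mult
 | |- continuous (fun t => - _) _ => apply Rc_opp
 | |- continuous (fun t => t) _ => apply Rc_id
 | |- continuous (fun t => ?c) _ => apply Rc_const
 | |- _ => solve [eauto]
 end.
Ltac cont := repeat cont1.

Ltac der1 := match goal with
 | |- is_derive (Rminus ?c) _ _ => apply Rd_minus_c
 | |- is_derive (Rplus ?c) _ _ => apply Rd_plus_c
 | |- is_derive (Rmult ?c) _ _ => apply Rd_mult_c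
 | |- is_derive (fun t => _ + _) _ _ => apply Rd_plus
 | |- is_derive (fun t => _ - _) _ _ => apply Rd_minus
 | |- is_derive (fun t => _ * _) _ _ => apply Rd_mult
 | |- is_derive (fun t => - _) _ _ => apply Rd_opp
 | |- is_derive (fun t => t) _ _ => apply Rd_id
 | |- is_derive (fun t => ?c) _ _ => apply Rd_const
 | |- _ => solve [eauto]
 end.
Ltac der := repeat der1.

Lemma lip_cont (f : R -> R) t K :
  (forall s, Rabs (f s - f t) <= K * Rabs (s - t)) -> continuous f t.
Proof.
  intros H. apply continuity_pt_filterlim.
  intros eps Heps. exists (eps / (Rabs K + 1)). split.
  - apply Rdiv_lt_0_compat; auto. pose proof (Rabs_pos K); lra.
  - intros x [_ Hx]. simpl in *. unfold R_dist in *.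
    pose proof (H x). pose proof (Rabs_pos K). pose proof (Rabs_pos (x - t)).
    assert (K * Rabs (x - t) <= Rabs K * Rabs (x - t)).
    { apply Rmult_le_compat_r; auto. apply Rle_abs. }
    assert (Rabs K * Rabs (x - t) < eps).
    { apply Rle_lt_trans with ((Rabs K + 1) * Rabs (x - t)). nra.
      replace eps with ((Rabs K + 1) * (eps / (Rabs K + 1))) by (field; lra).
      apply Rmult_lt_compat_l; lra. }
    lra.
Qed.

Definition clamp (a b t : R) : R := Rmax a (Rmin t b).

Lemma clamp_lip a b s t : Rabs (clamp a b s - clamp a b t) <= 1 * Rabs (s - t).
Proof.
  unfold clamp, Rmin.
  destruct (Rle_dec s b); destruct (Rle_dec t b); unfold Rmax;
  repeat match goal with |- context [Rle_dec ?x ?y] => destruct (Rle_dec x y) end;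
  unfold Rabs; repeat match goal with |- context [Rcase_abs ?x] => destruct (Rcase_abs x) end; lra.
Qed.
Lemma clamp_cont a b t : continuous (clamp a b) t.
Proof. apply lip_cont with 1. intros; apply clamp_lip. Qed.
Lemma clamp_low a b t : a <= b -> t <= a -> clamp a b t = a.
Proof. intros. unfold clamp, Rmin. destruct (Rle_dec t b); unfold Rmax;
  repeat match goal with |- context [Rle_dec ?x ?y] => destruct (Rle_dec x y) end; lra. Qed.
Lemma clamp_high a b t : a <= b -> b <= t -> clamp a b t = b.
Proof. intros. unfold clamp, Rmin. destruct (Rle_dec t b); unfold Rmax;
  repeat match goal with |- context [Rle_dec ?x ?y] => destruct (Rle_dec x y) end; lra. Qed.
Lemma clamp_mid a b t : a <= t <= b -> clamp a b t = t.
Proof. intros. unfold clamp, Rmin. destruct (Rle_dec t b); unfold Rmax;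
  repeat match goal with |- context [Rle_dec ?x ?y] => destruct (Rle_dec x y) end; lra. Qed.

Ltac Req := match goal with |- @eq _ ?x ?y => change (@eq R x y) end.

Section Part.
Variable l : nat.
Variable eta : nat -> R.
Hypothesis Hstep : forall i, (i <= l)%nat -> eta i < eta (S i).

Lemma eta_mono : forall i j, (i <= j)%nat -> (j <= S l)%nat -> eta i <= eta j.
Proof.
  intros i j Hij. induction Hij as [|j Hij IH]; intros Hj.
  - lra.
  - assert (eta j < eta (S j)) by (apply Hstep; lia). specialize (IH ltac:(lia)). lra.
Qed.

Lemma locate : forall n, (n <= l)%nat -> forall t, eta 0%nat <= t <= eta (S n) ->
  exists j, (j <= n)%nat /\ eta j <= t <= eta (S j).
Proof.
  induction n; intros Hn t Ht.
  - exists 0%nat; split; [lia|lra].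
  - destruct (Rle_dec t (eta (S n))) as [H|H].
    + destruct (IHn ltac:(lia) t ltac:(lra)) as [j [Hj Hj']]. exists j; split; [lia|auto].
    + exists (S n); split; [lia|lra].
Qed.

Fixpoint isum (g : R -> R) (n : nat) (t : R) : R :=
  match n with
  | O => 0
  | S k => isum g k t + (g (eta (S k)) - g (eta k)) / (eta (S k) - eta k) * (clamp (eta k) (eta (S k)) t - eta k)
  end.

Definition Interp (g : R -> R) (t : R) : R := g (eta 0%nat) + isum g (S l) t.

Lemma isum_cont g n t : continuous (isum g n) t.
Proof.
  induction n; simpl.
  - apply Rc_const.
  - apply (Rc_plus (isum g n)); auto. apply Rc_mult. apply Rc_const. apply Rc_minus.
    apply clamp_cont. apply Rc_const.
Qed.

Lemma Interp_cont g t : continuous (Interp g) t.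
Proof. unfold Interp. apply (Rc_plus (fun _ => g (eta 0%nat))). apply Rc_const. apply isum_cont. Qed.

Lemma isum_after g : forall n, (n <= S l)%nat -> forall t, eta n <= t ->
  isum g n t = g (eta n) - g (eta 0%nat).
Proof.
  induction n; intros Hn t Ht; simpl.
  - ring.
  - assert (eta n < eta (S n)) by (apply Hstep; lia).
    rewrite IHn by (try lia; lra). rewrite clamp_high by lra. field. lra.
Qed.

Lemma isum_stable g j t : (j <= l)%nat -> t <= eta (S j) ->
  forall n, (S j <= n)%nat -> (n <= S l)%nat -> isum g n t = isum g (S j) t.
Proof.
  intros Hj Ht n Hn. induction Hn as [|n Hn IH]; intros Hn'.
  - reflexivity.
  - rewrite <- IH by lia. simpl (isum g (S n) t).
    assert (eta n < eta (S n)) by (apply Hstep; lia).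
    assert (eta (S j) <= eta n) by (apply eta_mono; lia).
    rewrite clamp_low by lra. ring.
Qed.

Lemma Interp_elem g j t : (j <= l)%nat -> eta j <= t <= eta (S j) ->
  Interp g t = g (eta j) + (g (eta (S j)) - g (eta j)) / (eta (S j) - eta j) * (t - eta j).
Proof.
  intros Hj Ht. unfold Interp.
  rewrite (isum_stable g j t Hj ltac:(lra) (S l)) by lia.
  simpl. rewrite isum_after by (try lia; lra). rewrite clamp_mid by lra. ring.
Qed.

Lemma Interp_node g j : (j <= S l)%nat -> Interp g (eta j) = g (eta j).
Proof.
  intros Hj. destruct j.
  - rewrite (Interp_elem g 0) by (try lia; pose proof (Hstep 0 ltac:(lia)); lra).
    ring.
  - assert (eta j < eta (S j)) by (apply Hstep; lia).
    rewrite (Interp_elem g j) by (try lia; lra). field. lra.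
Qed.

End Part.

Definition WD (a b : R) (v dv : R -> R) (t : R) : Prop :=
  forall eps, 0 < eps -> exists delta, 0 < delta /\
    forall s, a <= s <= b -> Rabs (s - t) < delta ->
      Rabs (v s - v t - dv t * (s - t)) <= eps * Rabs (s - t).

Lemma C1_from_glob a b (f df : R -> R) :
  (forall t, is_derive f t (df t)) -> (forall t, continuous df t) -> C1_on a b f.
Proof.
  intros Hd Hc. exists df. split.
  - intros t _ eps Heps. destruct (proj1 (is_derive_Reals f t (df t)) (Hd t) eps Heps) as [d Hdl].
    exists d. split. apply cond_pos. intros s _ Hs.
    destruct (Req_dec s t) as [->|Hne].
    + replace (f t - f t - df t * (t - t)) with 0 by ring. rewrite Rabs_R0, Rminus_diag, Rabs_R0. lra.
    + assert (Hh : s - t <> 0) by lra.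
      specialize (Hdl (s - t) Hh Hs). replace (t + (s - t)) with s in Hdl by ring.
      replace (f s - f t - df t * (s - t)) with (((f s - f t) / (s - t) - df t) * (s - t)) by (field; auto).
      rewrite Rabs_mult. apply Rmult_le_compat_r. apply Rabs_pos. lra.
  - intros t _ eps Heps.
    pose proof (proj2 (continuity_pt_filterlim df t) (Hc t)) as Hct.
    destruct (Hct eps Heps) as [d [Hd0 Hdd]]. exists d; split; auto.
    intros s _ Hs. destruct (Req_dec s t) as [->|Hne].
    + rewrite Rminus_diag, Rabs_R0; auto.
    + apply (Hdd s). split. split; [exact I|auto]. simpl. unfold R_dist. auto.
Qed.

Lemma WD_interior a b v dv t : a < t < b -> WD a b v dv t -> is_derive v t (dv t).
Proof.
  intros Ht H. apply is_derive_Reals. intros eps Heps.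
  destruct (H (eps/2) ltac:(lra)) as [d [Hd Hs]].
  assert (Hpos : 0 < Rmin d (Rmin (t - a) (b - t))).
  { repeat apply Rmin_glb_lt; lra. }
  exists (mkposreal _ Hpos). intros h Hh Hlt. simpl in Hlt.
  assert (Hl1 : Rabs h < d) by (eapply Rlt_le_trans; [exact Hlt| apply Rmin_l]).
  assert (Hl2 : Rabs h < Rmin (t - a) (b - t)) by (eapply Rlt_le_trans; [exact Hlt| apply Rmin_r]).
  assert (Hl3 : Rabs h < t - a) by (eapply Rlt_le_trans; [exact Hl2| apply Rmin_l]).
  assert (Hl4 : Rabs h < b - t) by (eapply Rlt_le_trans; [exact Hl2| apply Rmin_r]).
  pose proof (Rle_abs h). pose proof (Rle_abs (-h)). rewrite Rabs_Ropp in *.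
  specialize (Hs (t + h) ltac:(lra)). replace (t + h - t) with h in Hs by ring.
  specialize (Hs Hl1).
  replace ((v (t + h) - v t) / h - dv t) with ((v (t + h) - v t - dv t * h) / h) by (field; auto).
  unfold Rdiv. rewrite Rabs_mult, Rabs_inv.
  assert (0 < Rabs h) by (apply Rabs_pos_lt; auto).
  apply Rle_lt_trans with (eps / 2 * Rabs h * / Rabs h).
  apply Rmult_le_compat_r. left; apply Rinv_0_lt_compat; auto. auto.
  field_simplify; lra.
Qed.

Lemma WD_poly a b v dv t al be A B C :
  a <= al -> al < be -> be <= b -> al <= t <= be ->
  (forall s, al <= s <= be -> v s = A + B * s + C * s ^ 2) ->
  WD a b v dv t -> dv t = B + 2 * C * t.
Proof.
  intros H1 H2 H3 Ht Hv H.
  destruct (Req_dec (dv t) (B + 2 * C * t)) as [E|E]; auto. exfalso.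
  set (D := Rabs (dv t - (B + 2 * C * t))).
  assert (HD : 0 < D) by (apply Rabs_pos_lt; lra).
  destruct (H (D/2) ltac:(lra)) as [d [Hd Hs]].
  set (r := Rmin (d/2) (Rmin ((be - al)/2) (D / (4 * (Rabs C + 1))))).
  assert (HCp : 0 < Rabs C + 1) by (pose proof (Rabs_pos C); lra).
  assert (Hr : 0 < r).
  { unfold r. repeat apply Rmin_glb_lt; try lra. apply Rdiv_lt_0_compat; lra. }
  assert (Hr1 : r <= d/2) by apply Rmin_l.
  assert (Hr2 : r <= (be - al)/2) by (eapply Rle_trans; [apply Rmin_r|apply Rmin_l]).
  assert (Hr3 : r <= D / (4 * (Rabs C + 1))) by (eapply Rle_trans; [apply Rmin_r|apply Rmin_r]).
  assert (Hrc : Rabs C * r < D / 2).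
  { apply Rle_lt_trans with (Rabs C * (D / (4 * (Rabs C + 1)))).
    apply Rmult_le_compat_l; auto. apply Rabs_pos.
    apply Rmult_lt_reg_r with (4 * (Rabs C + 1)). lra.
    field_simplify; try lra. pose proof (Rabs_pos C). nra. }
  assert (Hex : exists s, al <= s <= be /\ s <> t /\ Rabs (s - t) <= r).
  { destruct (Rle_dec (t + r) be).
    - exists (t + r). split; [lra|]. split; [lra|]. replace (t + r - t) with r by ring.
      rewrite Rabs_pos_eq; lra.
    - exists (t - r). split; [lra|]. split; [lra|]. replace (t - r - t) with (- r) by ring.
      rewrite Rabs_Ropp, Rabs_pos_eq; lra. }
  destruct Hex as [s [Hs1 [Hs2 Hs3]]].
  specialize (Hs s ltac:(lra) ltac:(lra)).
  rewrite (Hv s Hs1), (Hv t Ht) in Hs.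
  replace (A + B * s + C * s ^ 2 - (A + B * t + C * t ^ 2) - dv t * (s - t))
    with ((s - t) * (- (dv t - (B + 2 * C * t)) + C * (s - t))) in Hs by ring.
  rewrite Rabs_mult in Hs.
  assert (0 < Rabs (s - t)) by (apply Rabs_pos_lt; lra).
  assert (Hk : Rabs (- (dv t - (B + 2 * C * t)) + C * (s - t)) <= D / 2).
  { apply Rmult_le_reg_l with (Rabs (s - t)); auto. lra. }
  pose proof (Rabs_triang_inv (- (dv t - (B + 2 * C * t))) (- (C * (s - t)))) as Htr.
  rewrite Rabs_Ropp in Htr. fold D in Htr.
  replace (- (dv t - (B + 2 * C * t)) - - (C * (s - t))) with (- (dv t - (B + 2 * C * t)) + C * (s - t)) in Htr by ring.
  rewrite Rabs_Ropp, Rabs_mult in Htr.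
  assert (Rabs C * Rabs (s - t) <= Rabs C * r) by (apply Rmult_le_compat_l; [apply Rabs_pos|auto]).
  lra.
Qed.

Lemma RInt_extR (f g : R -> R) a b : (forall x, f x = g x) -> RInt f a b = RInt g a b.
Proof. intros H. apply RInt_ext. intros; apply H. Qed.
Lemma RInt_extI (f g : R -> R) a b : (forall x, Rmin a b < x < Rmax a b -> f x = g x) -> RInt f a b = RInt g a b.
Proof. intros H. apply RInt_ext. auto. Qed.

Definition Cg (f : R -> R) := forall t, continuous f t.

Lemma exC f a b : Cg f -> ex_RInt f a b.
Proof. intros H. apply (@ex_RInt_continuous R_CompleteNormedModule). intros; apply H. Qed.

Lemma RInt_plusC f g a b : Cg f -> Cg g -> RInt (fun t => f t + g t) a b = RInt f a b + RInt g a b.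
Proof. intros. apply (RInt_plus f g); apply exC; auto. Qed.
Lemma RInt_minusC f g a b : Cg f -> Cg g -> RInt (fun t => f t - g t) a b = RInt f a b - RInt g a b.
Proof. intros. apply (RInt_minus f g); apply exC; auto. Qed.
Lemma RInt_scalC f k a b : Cg f -> RInt (fun t => k * f t) a b = k * RInt f a b.
Proof. intros. apply (RInt_scal f a b k); apply exC; auto. Qed.

Lemma deriv_RInt f a : Cg f -> forall t, is_derive (fun x => RInt f a x) t (f t).
Proof.
  intros H t. apply is_derive_RInt with a.
  - exists (mkposreal 1 Rlt_0_1). intros y _. apply RInt_correct. apply exC; auto.
  - apply H.
Qed.

Lemma RInt_cont f a : Cg f -> Cg (fun x => RInt f a x).
Proof. intros H t. apply (@ex_derive_continuous R_AbsRing R_NormedModule). eexists. apply deriv_RInt; auto. Qed.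

Lemma FTC (F f : R -> R) a b : (forall x, is_derive F x (f x)) -> Cg f -> RInt f a b = F b - F a.
Proof.
  intros H1 H2. apply is_RInt_unique. apply (is_RInt_derive F f). intros; auto. intros; auto.
Qed.

Lemma RInt_sq_ge0 f a b : a <= b -> Cg f -> 0 <= RInt (fun t => f t * f t) a b.
Proof.
  intros Hab H. apply RInt_ge_0; auto. apply exC. intro; apply Rc_mult; auto.
  intros. nra.
Qed.

Lemma CS f g a b : a <= b -> Cg f -> Cg g ->
  (RInt (fun t => f t * g t) a b) ^ 2 <= RInt (fun t => f t * f t) a b * RInt (fun t => g t * g t) a b.
Proof.
  intros Hab Hf Hg.
  set (A := RInt (fun t => f t * f t) a b : R).
  set (B := RInt (fun t => f t * g t) a b : R).
  set (C := RInt (fun t => g t * g t) a b : R).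
  assert (Hq : forall k, 0 <= A - 2 * k * B + k * k * C).
  { intros k.
    assert (E : RInt (fun t => (f t - k * g t) * (f t - k * g t)) a b = A - 2 * k * B + k * k * C).
    { rewrite (RInt_extR _ (fun t => (f t * f t - (2 * k) * (f t * g t)) + (k * k) * (g t * g t))).
      2: { intros; ring. }
      rewrite RInt_plusC. rewrite RInt_minusC. rewrite RInt_scalC. rewrite RInt_scalC. reflexivity.
      all: intro; cont. }
    rewrite <- E. apply RInt_sq_ge0; auto. intro; cont. }
  assert (HA : 0 <= A) by (apply RInt_sq_ge0; auto).
  assert (HC : 0 <= C) by (apply RInt_sq_ge0; auto).
  destruct (Req_dec C 0) as [HC0|HC0].
  - destruct (Req_dec B 0) as [HB0|HB0].
    + rewrite HB0, HC0. lra.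
    + specialize (Hq ((A + 1) / (2 * B))). rewrite HC0 in Hq.
      replace (A - 2 * ((A + 1) / (2 * B)) * B + (A + 1) / (2 * B) * ((A + 1) / (2 * B)) * 0) with (-1) in Hq by (field; auto).
      lra.
  - specialize (Hq (B / C)).
    replace (A - 2 * (B / C) * B + B / C * (B / C) * C) with (A - B * B / C) in Hq by (field; auto).
    assert (0 < C) by lra.
    assert (B * B / C <= A) by lra.
    apply Rmult_le_compat_r with (r := C) in H0; [|lra].
    replace (B * B / C * C) with (B * B) in H0 by (field; auto). simpl. lra.
Qed.

Lemma RInt_pointR (f : R -> R) a : RInt f a a = 0.
Proof. apply (RInt_point a f). Qed.

Lemma RInt_partition (f : R -> R) (eta : nat -> R) : Cg f -> forall n,
  RInt f (eta 0%nat) (eta (S n)) = sum_f_R0 (fun i => RInt f (eta i) (eta (S i))) n.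
Proof.
  intros Hf n. induction n; simpl. reflexivity.
  rewrite <- IHn. symmetry. apply (RInt_Chasles f); apply exC; auto.
Qed.

Lemma sum_le_K (X Y : nat -> R) K n : (forall i, (i <= n)%nat -> X i <= K * Y i) ->
  sum_f_R0 X n <= K * sum_f_R0 Y n.
Proof.
  induction n; intros H; simpl. apply H; lia.
  rewrite Rmult_plus_distr_l. apply Rplus_le_compat. apply IHn; intros; apply H; lia. apply H; lia.
Qed.

Lemma fold_max_in (L : list R) x : In x L -> x <= fold_right Rmax 0 L.
Proof.
  induction L; simpl; intros H. destruct H.
  destruct H as [->|H]. apply Rmax_l. eapply Rle_trans. apply IHL; auto. apply Rmax_r.
Qed.

Lemma fold_max_le (L : list R) M : 0 <= M -> (forall x, In x L -> x <= M) -> fold_right Rmax 0 L <= M.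
Proof.
  induction L; simpl; intros H0 H. auto.
  apply Rmax_lub. apply H; auto. apply IHL; auto.
Qed.

Lemma mesh_ge l eta i : (i <= l)%nat -> eta (S i) - eta i <= mesh l eta.
Proof.
  intros Hi. unfold mesh. apply fold_max_in. apply in_map_iff. exists i. split; auto.
  apply in_seq. lia.
Qed.

Lemma mesh_le_T T l eta : is_partition T l eta -> mesh l eta <= T.
Proof.
  intros [H0 [HT Hs]]. unfold mesh. apply fold_max_le.
  - rewrite <- HT, <- H0. apply (eta_mono l eta Hs); lia.
  - intros x Hx. apply in_map_iff in Hx. destruct Hx as [i [<- Hi]]. apply in_seq in Hi.
    assert (eta 0%nat <= eta i) by (apply (eta_mono l eta Hs); lia).
    assert (eta (S i) <= eta (S l)) by (apply (eta_mono l eta Hs); lia). lra.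
Qed.

Lemma der_cont (f df : R -> R) : (forall x, is_derive f x (df x)) -> Cg f.
Proof. intros H t. apply (@ex_derive_continuous R_AbsRing R_NormedModule). eexists; apply H. Qed.

Lemma L2D al be X Y Sx Sy P1 P2 :
  0 <= Sx -> 0 <= Sy -> 0 <= P1 -> 0 <= P2 ->
  X ^ 2 <= Sx * P1 -> Y ^ 2 <= Sy * P2 ->
  (al * X + be * Y) ^ 2 <= (al ^ 2 * Sx + be ^ 2 * Sy) * (P1 + P2).
Proof.
  intros H1 H2 H3 H4 H5 H6.
  set (m := Rabs (al * X * (be * Y))).
  assert (Hm0 : 0 <= m) by apply Rabs_pos.
  assert (HA : 0 <= al ^ 2 * Sx * P2) by (apply Rmult_le_pos; [apply Rmult_le_pos; [apply pow2_ge_0|auto]|auto]).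
  assert (HB : 0 <= be ^ 2 * Sy * P1) by (apply Rmult_le_pos; [apply Rmult_le_pos; [apply pow2_ge_0|auto]|auto]).
  assert (Hm2 : m * m <= (al ^ 2 * Sx * P2) * (be ^ 2 * Sy * P1)).
  { pose proof (Rsqr_abs (al * X * (be * Y))) as E. unfold Rsqr in E. fold m in E. rewrite <- E.
    replace (al * X * (be * Y) * (al * X * (be * Y))) with ((al^2 * be^2) * (X^2 * Y^2)) by ring.
    replace (al ^ 2 * Sx * P2 * (be ^ 2 * Sy * P1)) with ((al^2 * be^2) * ((Sx * P1) * (Sy * P2))) by ring.
    apply Rmult_le_compat_l. apply Rmult_le_pos; apply pow2_ge_0.
    apply Rmult_le_compat; auto; apply pow2_ge_0. }
  assert (Hm : 2 * m <= al ^ 2 * Sx * P2 + be ^ 2 * Sy * P1).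
  { set (A0 := al ^ 2 * Sx * P2) in *. set (B0 := be ^ 2 * Sy * P1) in *.
    destruct (Rle_dec (2 * m) (A0 + B0)) as [|Hn]; auto.
    assert (HH : (A0 + B0) * (A0 + B0) < (2 * m) * (2 * m)) by (apply Rmult_le_0_lt_compat; lra).
    pose proof (pow2_ge_0 (A0 - B0)).
    assert (E1 : (A0 - B0) ^ 2 = (A0 + B0) * (A0 + B0) - 4 * (A0 * B0)) by ring.
    assert (E2 : (2 * m) * (2 * m) = 4 * (m * m)) by ring.
    lra. }
  assert (H7 : al * X * (be * Y) <= m) by apply Rle_abs.
  assert (H8 : al ^ 2 * X ^ 2 <= al ^ 2 * (Sx * P1)) by (apply Rmult_le_compat_l; auto; apply pow2_ge_0).
  assert (H9 : be ^ 2 * Y ^ 2 <= be ^ 2 * (Sy * P2)) by (apply Rmult_le_compat_l; auto; apply pow2_ge_0).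
  assert (E3 : (al * X + be * Y) ^ 2 = al ^ 2 * X ^ 2 + be ^ 2 * Y ^ 2 + 2 * (al * X * (be * Y))) by ring.
  assert (E4 : (al ^ 2 * Sx + be ^ 2 * Sy) * (P1 + P2) = al ^ 2 * (Sx * P1) + be ^ 2 * (Sy * P2) + (al ^ 2 * Sx * P2 + be ^ 2 * Sy * P1)) by ring.
  lra.
Qed.

Section Elem.
Variables pt ut U : R -> R.
Hypothesis Hut : forall x, is_derive ut x (pt x).
Hypothesis HU : forall x, is_derive U x (ut x).
Hypothesis Hpt : Cg pt.
Variables a b : R.
Hypothesis Hab : a < b.

Let Cut : Cg ut := der_cont ut pt Hut.
Let CU : Cg U := der_cont U ut HU.

Definition elerr (t : R) := U t - (U a + (U b - U a) / (b - a) * (t - a)).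

Lemma elerr_point t : a <= t <= b ->
  elerr t ^ 2 <= (t - a) ^ 2 * (b - t) ^ 2 / (3 * (b - a)) * RInt (fun s => pt s * pt s) a b.
Proof.
  intros Ht.
  set (X := RInt (fun s => (s - a) * pt s) a t).
  set (Y := RInt (fun s => (b - s) * pt s) t b).
  assert (HX : X = ((t - a) * ut t - U t) - ((a - a) * ut a - U a)).
  { unfold X. apply (FTC (fun s => (s - a) * ut s - U s)).
    - intros x. eapply Rd_eq. der. simpl. Req; ring.
    - intro; cont. }
  assert (HY : Y = ((b - b) * ut b + U b) - ((b - t) * ut t + U t)).
  { unfold Y. apply (FTC (fun s => (b - s) * ut s + U s)).
    - intros x. eapply Rd_eq. der. simpl. Req; ring.
    - intro; cont. }
  assert (Hid : elerr t = - ((b - t) / (b - a) * X + (t - a) / (b - a) * Y)).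
  { rewrite HX, HY. unfold elerr. Req; field. lra. }
  assert (Hsq : forall c d, RInt (fun s => (s - c) * (s - c)) c d = (d - c) ^ 3 / 3).
  { intros c d. rewrite (FTC (fun s => (s - c) * (s - c) * (s - c) / 3)). Req; field.
    intros x. eapply Rd_eq. unfold Rdiv. apply Rd_mult. der. apply Rd_const. simpl. Req; field.
    intro; cont. }
  assert (Hsq2 : RInt (fun s => (b - s) * (b - s)) t b = (b - t) ^ 3 / 3).
  { rewrite (FTC (fun s => - ((b - s) * (b - s) * (b - s)) / 3)). Req; field.
    intros x. eapply Rd_eq. unfold Rdiv. apply Rd_mult. der. apply Rd_const. simpl. Req; field.
    intro; cont. }
  assert (CX : X ^ 2 <= (t - a) ^ 3 / 3 * RInt (fun s => pt s * pt s) a t).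
  { rewrite <- Hsq. unfold X. apply (CS (fun s => s - a) pt); try lra; auto. intro; cont. }
  assert (CY : Y ^ 2 <= (b - t) ^ 3 / 3 * RInt (fun s => pt s * pt s) t b).
  { rewrite <- Hsq2. unfold Y. apply (CS (fun s => b - s) pt); try lra; auto. intro; cont. }
  assert (Hch : RInt (fun s => pt s * pt s) a t + RInt (fun s => pt s * pt s) t b = RInt (fun s => pt s * pt s) a b).
  { apply (RInt_Chasles (fun s => pt s * pt s)); apply exC; intro; cont. }
  assert (P1 : 0 <= RInt (fun s => pt s * pt s) a t) by (apply RInt_sq_ge0; auto; lra).
  assert (P2 : 0 <= RInt (fun s => pt s * pt s) t b) by (apply RInt_sq_ge0; auto; lra).
  pose proof (L2D ((b - t) / (b - a)) ((t - a) / (b - a)) X Y ((t - a) ^ 3 / 3) ((b - t) ^ 3 / 3)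
     _ _ ltac:(apply Rdiv_le_0_compat; [apply pow_le; lra|lra])
            ltac:(apply Rdiv_le_0_compat; [apply pow_le; lra|lra]) P1 P2 CX CY) as HL.
  rewrite Hch in HL.
  rewrite Hid. replace ((- ((b - t) / (b - a) * X + (t - a) / (b - a) * Y)) ^ 2)
    with (((b - t) / (b - a) * X + (t - a) / (b - a) * Y) ^ 2) by ring.
  eapply Rle_trans. apply HL. right. Req; field. lra.
Qed.

Lemma elerr_bound :
  RInt (fun t => elerr t * elerr t) a b <= (b - a) ^ 4 / 90 * RInt (fun s => pt s * pt s) a b.
Proof.
  set (P := RInt (fun s => pt s * pt s) a b).
  assert (Ce : Cg elerr) by (intro; unfold elerr; cont).
  eapply Rle_trans.
  apply (RInt_le _ (fun t => (t - a) * (t - a) * ((b - t) * (b - t)) * (/ (3 * (b - a)) * P))). lra.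
  apply exC; intro; cont.
  apply exC; intro; cont.
  intros x Hx. pose proof (elerr_point x ltac:(lra)) as H. fold P in H.
  replace (elerr x * elerr x) with (elerr x ^ 2) by ring. eapply Rle_trans. apply H. right. field. lra.
  right.
  rewrite (FTC (fun t => / (3 * (b - a)) * P * ((b - a) ^ 2 * (t - a) ^ 3 / 3 - (b - a) * (t - a) ^ 4 / 2 + (t - a) ^ 5 / 5)) ).
  Req; field. lra.
  intros x. auto_derive. auto. Req; field. lra.
  intro. cont.
Qed.

End Elem.

Lemma PI_lt : PI < 32/10.
Proof.
  destruct (Rlt_or_le PI (32/10)) as [H|H]; auto. exfalso.
  pose proof (SIN (32/10) ltac:(lra) H) as [_ H2].
  pose proof (sin_ge_0 (32/10) ltac:(lra) H).
  unfold sin_ub, sin_approx in H2. cbn [sum_f_R0] in H2. unfold sin_term in H2.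
  cbn [Nat.mul Nat.add] in H2.
  rewrite !fact_simpl in H2. cbn [Factorial.fact] in H2. rewrite !mult_INR in H2.
  cbn [INR] in H2. simpl pow in H2.
  lra.
Qed.

Lemma polyA s : 0 <= s <= 3/2 -> 360 * (1+s)^2 + 938 * s^4 <= 90 * (2+s)^4.
Proof.
  intros Hs. assert (s^2 <= 9/4) by nra.
  assert (0 <= s^2) by nra. assert (0 <= s^3) by (simpl; nra).
  assert (s^4 <= 9/4 * s^2) by (replace (s^4) with (s^2*s^2) by ring; nra).
  nra.
Qed.

Lemma polyB s P8 : 3/2 <= s -> P8 <= 11000 ->
  1440 * s^4 * (1+s)^2 + P8 * (1+s)^2 <= 360 * s^4 * (2+s)^4.
Proof.
  intros Hs HP.
  assert (H1 : (1+s)^2 * (s+3)^2 <= (2+s)^4).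
  { replace ((2+s)^4) with (((2+s)^2)^2) by ring.
    replace ((1+s)^2 * (s+3)^2) with (((1+s)*(s+3))^2) by ring.
    apply pow_incr. split. nra. nra. }
  assert (H2 : 81/16 <= s^4).
  { replace (s^4) with ((s^2)^2) by ring. replace (81/16) with ((9/4)^2) by field.
    apply pow_incr. split. lra. nra. }
  assert (H3 : 65/4 <= (s+3)^2 - 4) by nra.
  assert (H4 : 11000 <= 360 * s^4 * ((s+3)^2 - 4)).
  { apply Rle_trans with (360 * (81/16) * (65/4)). lra.
    apply Rmult_le_compat. lra. lra. apply Rmult_le_compat_l; lra. auto. }
  assert (H5 : 0 <= (1+s)^2) by (apply pow2_ge_0).
  assert (H6 : 0 <= s^4) by lra.
  assert (H7 : 360 * s^4 * ((1+s)^2 * (s+3)^2) <= 360 * s^4 * (2+s)^4)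
    by (apply Rmult_le_compat_l; [lra|auto]).
  assert (H8 : (1440 * s^4 + P8) * (1+s)^2 <= (360 * s^4 * (s+3)^2) * (1+s)^2).
  { apply Rmult_le_compat_r; auto. lra. }
  nra.
Qed.

Lemma FA (s y : R) : 0 <= s -> 0 <= y -> y <= s^2 -> y * s^2 <= PI^4/(2*(2+s)^2) ->
  4/(2+s)^4 <= 1/(1+s)^2 - y^2/90.
Proof.
  intros Hs Hy H1 H2.
  assert (HD : 0 < (2+s)^4) by (apply pow_lt; lra).
  assert (HE : 0 < (1+s)^2) by (apply pow_lt; lra).
  destruct (Rle_dec s (3/2)) as [Hc|Hc].
  - assert (Hy2 : y^2 <= s^4) by (replace (s^4) with ((s^2)^2) by ring; apply pow_incr; lra).
    assert (HA : (1+s)^2 <= 25/4) by nra.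
    assert (HB : (2+s)^4 <= 2401/16).
    { replace ((2+s)^4) with (((2+s)^2)^2) by ring. replace (2401/16) with ((49/4)^2) by field.
      apply pow_incr. split. nra. nra. }
    assert (HDE : (2+s)^4 * (1+s)^2 <= 938).
    { apply Rle_trans with (2401/16 * (25/4)). apply Rmult_le_compat; lra. lra. }
    pose proof (polyA s ltac:(lra)) as HP.
    assert (Hk : 360 * (1+s)^2 + s^4 * ((2+s)^4 * (1+s)^2) <= 90 * (2+s)^4).
    { assert (0 <= s^4) by (apply pow_le; lra).
      assert (s^4 * ((2+s)^4 * (1+s)^2) <= s^4 * 938) by (apply Rmult_le_compat_l; lra). lra. }
    assert (4/(2+s)^4 + s^4/90 <= 1/(1+s)^2).
    { replace (4/(2+s)^4 + s^4/90) with ((360 * (1+s)^2 + s^4 * ((2+s)^4 * (1+s)^2)) / (90 * (2+s)^4 * (1+s)^2)) by (field; lra).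
      replace (1/(1+s)^2) with ((90 * (2+s)^4) / (90 * (2+s)^4 * (1+s)^2)) by (field; lra).
      unfold Rdiv. apply Rmult_le_compat_r. left; apply Rinv_0_lt_compat. nra. auto. }
    lra.
  - assert (Hs0 : 0 < s) by lra.
    assert (Hs2 : 0 < s^2) by (apply pow_lt; lra).
    pose proof PI_lt as Hpi. pose proof PI_RGT_0 as Hpi0.
    assert (HP8 : PI^8 <= 11000).
    { apply Rle_trans with ((32/10)^8). apply pow_incr; lra. lra. }
    assert (Hy1 : y <= PI^4/(2*(2+s)^2) / s^2).
    { apply Rmult_le_reg_r with (s^2); auto. replace (PI^4/(2*(2+s)^2) / s^2 * s^2) with (PI^4/(2*(2+s)^2)) by (field; lra). lra. }
    assert (Hy2 : y^2 <= PI^8/(4*(2+s)^4*s^4)).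
    { eapply Rle_trans. apply pow_incr. split. auto. apply Hy1. right. field. split; lra. }
    pose proof (polyB s (PI^8) ltac:(lra) HP8) as HB.
    assert (4/(2+s)^4 + PI^8/(4*(2+s)^4*s^4)/90 <= 1/(1+s)^2).
    { assert (Hs4 : 0 < s^4) by (apply pow_lt; lra).
      replace (4/(2+s)^4 + PI^8/(4*(2+s)^4*s^4)/90) with ((1440 * s^4 * (1+s)^2 + PI^8 * (1+s)^2) / (360 * s^4 * (2+s)^4 * (1+s)^2)) by (field; lra).
      replace (1/(1+s)^2) with ((360 * s^4 * (2+s)^4) / (360 * s^4 * (2+s)^4 * (1+s)^2)) by (field; lra).
      unfold Rdiv. apply Rmult_le_compat_r. left; apply Rinv_0_lt_compat.
      apply Rmult_lt_0_compat; [apply Rmult_lt_0_compat; [lra|auto]|auto]. auto. }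
    lra.
Qed.

Section Main.
Variables T mu : R.
Variable l : nat.
Variable eta : nat -> R.
Variables u dv : R -> R.
Hypothesis HT : 0 < T.
Hypothesis Hmu : 0 < mu.
Hypothesis Heta0 : eta 0%nat = 0.
Hypothesis HetaT : eta (S l) = T.
Hypothesis Hstep : forall i, (i <= l)%nat -> eta i < eta (S i).
Hypothesis Hpq : forall i, (i <= l)%nat -> exists A B C : R,
  forall t, eta i <= t <= eta (S i) -> u t = A + B * t + C * t ^ 2.
Hypothesis HWD : forall t, 0 <= t <= T -> WD 0 T u dv t.
Hypothesis Hu0 : u 0 = 0.

Definition pt := Interp l eta dv.
Definition ut t := RInt pt 0 t.
Definition UU t := RInt ut 0 t.
Definition zz t := pt t + mu * UU t.
Definition IU := Interp l eta UU.
Definition ww t := pt t + mu * IU t.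
Definition vv t := RInt ww 0 t.

Lemma Cpt : Cg pt.
Proof. intro; apply Interp_cont. Qed.
Lemma Hut : forall x, is_derive ut x (pt x).
Proof. apply deriv_RInt, Cpt. Qed.
Lemma Cut : Cg ut.
Proof. apply (der_cont _ _ Hut). Qed.
Lemma HUU : forall x, is_derive UU x (ut x).
Proof. apply deriv_RInt, Cut. Qed.
Lemma CUU : Cg UU.
Proof. apply (der_cont _ _ HUU). Qed.
Lemma CIU : Cg IU.
Proof. intro; apply Interp_cont. Qed.
Lemma Czz : Cg zz.
Proof. intro. unfold zz. pose proof Cpt. pose proof CUU. cont. Qed.
Lemma Cww : Cg ww.
Proof. intro. unfold ww. pose proof Cpt. pose proof CIU. cont. Qed.
Lemma Hvv : forall x, is_derive vv x (ww x).
Proof. apply deriv_RInt, Cww. Qed.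
Lemma Cvv : Cg vv.
Proof. apply (der_cont _ _ Hvv). Qed.

Lemma eta_in i : (i <= S l)%nat -> 0 <= eta i <= T.
Proof.
  intros Hi. rewrite <- Heta0, <- HetaT. split; apply (eta_mono l eta Hstep); lia.
Qed.

Lemma dv_elem i A B C : (i <= l)%nat ->
  (forall t, eta i <= t <= eta (S i) -> u t = A + B * t + C * t ^ 2) ->
  forall t, eta i <= t <= eta (S i) -> dv t = B + 2 * C * t.
Proof.
  intros Hi Hu t Ht.
  pose proof (eta_in i ltac:(lia)). pose proof (eta_in (S i) ltac:(lia)).
  pose proof (Hstep i Hi).
  apply (WD_poly 0 T u dv t (eta i) (eta (S i)) A B C); try lra; auto.
  apply HWD. lra.
Qed.

Lemma pt_elem i A B C : (i <= l)%nat ->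
  (forall t, eta i <= t <= eta (S i) -> u t = A + B * t + C * t ^ 2) ->
  forall t, eta i <= t <= eta (S i) -> pt t = B + 2 * C * t.
Proof.
  intros Hi Hu t Ht. pose proof (Hstep i Hi).
  unfold pt. rewrite (Interp_elem l eta Hstep dv i t Hi Ht).
  rewrite !(dv_elem i A B C Hi Hu) by lra. field. lra.
Qed.

Lemma locate0 t : 0 <= t <= T -> exists j, (j <= l)%nat /\ eta j <= t <= eta (S j).
Proof. intros Ht. apply (locate l eta l (le_n l)). lra. Qed.

Lemma K1 t : 0 <= t <= T -> dv t = pt t.
Proof.
  intros Ht. destruct (locate0 t Ht) as [j [Hj Hjt]].
  destruct (Hpq j Hj) as [A [B [C Hu]]].
  rewrite (dv_elem j A B C Hj Hu t Hjt), (pt_elem j A B C Hj Hu t Hjt). reflexivity.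
Qed.

Lemma ut_elem i : (i <= l)%nat -> forall t, eta i <= t <= eta (S i) ->
  ut t - ut (eta i) = u t - u (eta i).
Proof.
  intros Hi t Ht. destruct (Hpq i Hi) as [A [B [C Hu]]].
  unfold ut. assert (Hc : RInt pt 0 (eta i) + RInt pt (eta i) t = RInt pt 0 t).
  { apply (RInt_Chasles pt); apply exC; apply Cpt. }
  rewrite <- Hc.
  rewrite (RInt_extI pt (fun s => B + 2 * C * s) (eta i) t).
  2: { intros x Hx. rewrite Rmin_left in Hx by lra. rewrite Rmax_right in Hx by lra.
       apply (pt_elem i A B C Hi Hu). lra. }
  rewrite (FTC (fun s => B * s + C * (s * s)) (fun s => B + 2 * C * s) (eta i) t).
  rewrite !Hu by (try lra; pose proof (Hstep i Hi); lra). Req; ring.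
  intros x. eapply Rd_eq. der. simpl. ring.
  intro; cont.
Qed.

Lemma ut_node : forall i, (i <= S l)%nat -> ut (eta i) = u (eta i).
Proof.
  induction i; intros Hi.
  - rewrite Heta0, Hu0. unfold ut. apply RInt_pointR.
  - pose proof (Hstep i ltac:(lia)).
    pose proof (ut_elem i ltac:(lia) (eta (S i)) ltac:(lra)). rewrite IHi in H0 by lia. lra.
Qed.

Lemma K2 t : 0 <= t <= T -> u t = ut t.
Proof.
  intros Ht. destruct (locate0 t Ht) as [j [Hj Hjt]].
  pose proof (ut_elem j Hj t Hjt). rewrite ut_node in H by lia. lra.
Qed.

Lemma K3 t : 0 < t < T -> Derive u t = pt t.
Proof.
  intros Ht. rewrite <- K1 by lra. apply is_derive_unique. apply (WD_interior 0 T); auto.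
  apply HWD; lra.
Qed.

Lemma ut0 : ut 0 = 0.
Proof. unfold ut. apply RInt_pointR. Qed.
Lemma UU0 : UU 0 = 0.
Proof. unfold UU. apply RInt_pointR. Qed.


Lemma ww_elem i : (i <= l)%nat -> exists al be, forall t, eta i <= t <= eta (S i) -> ww t = al + be * t.
Proof.
  intros Hi. destruct (Hpq i Hi) as [A [B [C Hu]]]. pose proof (Hstep i Hi).
  set (sl := (UU (eta (S i)) - UU (eta i)) / (eta (S i) - eta i)).
  exists (B + mu * (UU (eta i) - sl * eta i)), (2 * C + mu * sl).
  intros t Ht. unfold ww. rewrite (pt_elem i A B C Hi Hu t Ht).
  unfold IU. rewrite (Interp_elem l eta Hstep UU i t Hi Ht). fold sl. ring.
Qed.

Lemma RInt_affine (f : R -> R) al be c d t : Cg f -> c <= t <= d ->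
  (forall s, c <= s <= d -> f s = al + be * s) ->
  RInt f 0 t = (RInt f 0 c - al * c - be / 2 * c ^ 2) + al * t + be / 2 * t ^ 2.
Proof.
  intros Hf Ht Hs.
  assert (Hc : RInt f 0 c + RInt f c t = RInt f 0 t).
  { apply (RInt_Chasles f); apply exC; auto. }
  rewrite <- Hc.
  rewrite (RInt_extI f (fun s => al + be * s) c t).
  2: { intros x Hx. destruct (Req_dec c t) as [E|E].
       - subst. rewrite Rmin_left in Hx by lra. rewrite Rmax_right in Hx by lra. lra.
       - rewrite Rmin_left in Hx by lra. rewrite Rmax_right in Hx by lra. apply Hs. lra. }
  rewrite (FTC (fun s => al * s + be / 2 * (s * s)) (fun s => al + be * s) c t).
  Req; field.
  intros x. eapply Rd_eq. der. simpl. field.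
  intro; cont.
Qed.

Lemma Vh0_vv : Vh0 T l eta vv.
Proof.
  split; [split|].
  - apply (C1_from_glob 0 T vv ww). apply Hvv. apply Cww.
  - intros i Hi. destruct (ww_elem i Hi) as [al [be Hw]].
    exists (RInt ww 0 (eta i) - al * eta i - be / 2 * eta i ^ 2), al, (be / 2).
    intros t Ht. unfold vv. apply (RInt_affine ww al be (eta i) (eta (S i)) t Cww Ht Hw).
  - unfold vv. apply RInt_pointR.
Qed.

Lemma Derive_vv t : Derive vv t = ww t.
Proof. apply is_derive_unique. apply Hvv. Qed.

Lemma Derive_Hbar t : Derive (HbarT T vv) t = - ww t.
Proof.
  apply is_derive_unique. unfold HbarT. eapply Rd_eq.
  apply (Rd_minus (fun _ => vv T) vv). apply Rd_const. apply Hvv. simpl. ring.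
Qed.

Lemma H1_vv : H1semi T vv = sqrt (RInt (fun t => ww t * ww t) 0 T).
Proof.
  unfold H1semi, L2inner. f_equal. apply RInt_extR. intros; rewrite Derive_vv; auto.
Qed.

Lemma H1_u : H1semi T u = sqrt (RInt (fun t => pt t * pt t) 0 T).
Proof.
  unfold H1semi, L2inner. f_equal. apply RInt_extI. intros x Hx.
  rewrite Rmin_left in Hx by lra. rewrite Rmax_right in Hx by lra.
  rewrite K3 by lra. auto.
Qed.

Lemma bform_eq : bform T mu u (HbarT T vv) = RInt (fun t => ww t * zz t) 0 T.
Proof.
  unfold bform, L2inner.
  rewrite (RInt_extI (fun t => Derive u t * Derive (HbarT T vv) t) (fun t => (-1) * (ww t * pt t)) 0 T).
  2: { intros x Hx. rewrite Rmin_left in Hx by lra. rewrite Rmax_right in Hx by lra.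
       rewrite K3, Derive_Hbar by lra. ring. }
  rewrite (RInt_extI (fun t => u t * HbarT T vv t) (fun t => ut t * (vv T - vv t)) 0 T).
  2: { intros x Hx. rewrite Rmin_left in Hx by lra. rewrite Rmax_right in Hx by lra.
       unfold HbarT. rewrite K2 by lra. auto. }
  pose proof Cpt. pose proof Cut. pose proof CUU. pose proof Cww. pose proof Cvv.
  assert (IBP : RInt (fun t => ut t * (vv T - vv t) - UU t * ww t) 0 T = 0).
  { rewrite (FTC (fun t => UU t * (vv T - vv t))).
    replace (vv T - vv T) with 0 by ring. rewrite UU0. Req; ring.
    intros x. eapply Rd_eq. apply Rd_mult. apply HUU. apply (Rd_minus (fun _ => vv T) vv).
    apply Rd_const. apply Hvv. simpl. ring.
    intro; cont. }
  rewrite RInt_minusC in IBP by (intro; cont).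
  rewrite RInt_scalC by (intro; cont).
  rewrite (RInt_extR (fun t => ww t * zz t) (fun t => ww t * pt t + mu * (UU t * ww t))).
  2: { intros; unfold zz; ring. }
  rewrite RInt_plusC by (intro; cont). rewrite RInt_scalC by (intro; cont).
  assert (E : RInt (fun t => ut t * (vv T - vv t)) 0 T = RInt (fun t => UU t * ww t) 0 T) by lra.
  rewrite E. Req. ring.
Qed.

Lemma vv_nonzero : 0 < RInt (fun t => ww t * ww t) 0 T -> exists t, 0 <= t <= T /\ vv t <> 0.
Proof.
  intros Hpos. destruct (Classical_Prop.classic (exists t, 0 <= t <= T /\ vv t <> 0)) as [H|H]; auto.
  exfalso.
  assert (Hz : forall t, 0 <= t <= T -> vv t = 0).
  { intros t Ht. destruct (Req_dec (vv t) 0); auto. exfalso; apply H; eauto. }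
  assert (Hw : forall x, 0 < x < T -> ww x = 0).
  { intros x Hx.
    assert (Hpos' : 0 < Rmin x (T - x)) by (apply Rmin_glb_lt; lra).
    assert (Hloc : locally x (fun t => vv t = 0)).
    { exists (mkposreal _ Hpos'). intros y Hy. apply Hz.
      unfold ball in Hy; simpl in Hy. unfold AbsRing_ball, abs, minus, plus, opp in Hy; simpl in Hy.
      pose proof (Rmin_l x (T - x)). pose proof (Rmin_r x (T - x)).
      unfold Rabs in Hy. destruct (Rcase_abs (y + - x)); lra. }
    pose proof (is_derive_ext_loc vv (fun _ => 0) x (ww x) Hloc (Hvv x)) as Hd.
    apply is_derive_unique in Hd. rewrite Derive_const in Hd. auto. }
  assert (RInt (fun t => ww t * ww t) 0 T = RInt (fun _ => 0) 0 T).
  { apply RInt_extI. intros x Hx. rewrite Rmin_left in Hx by lra. rewrite Rmax_right in Hx by lra.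
    rewrite Hw by lra. ring. }
  rewrite H0 in Hpos. rewrite RInt_const in Hpos. unfold scal in Hpos; simpl in Hpos.
  unfold mult in Hpos; simpl in Hpos. lra.
Qed.

Lemma sq_ge0_0T f : Cg f -> 0 <= RInt (fun t => f t * f t) 0 T.
Proof. intros; apply RInt_sq_ge0; auto; lra. Qed.

Lemma stab : RInt (fun t => pt t * pt t) 0 T <= (1 + sqrt mu * T) ^ 2 * RInt (fun t => zz t * zz t) 0 T.
Proof.
  pose proof Cpt. pose proof Cut. pose proof CUU. pose proof Czz.
  set (A := RInt (fun t => ut t * ut t) 0 T).
  set (Bq := RInt (fun t => UU t * UU t) 0 T).
  set (Z := RInt (fun t => zz t * zz t) 0 T).
  set (IP := RInt (fun t => ((T - t) * ut t) * zz t) 0 T).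
  assert (HA : 0 <= A) by (apply sq_ge0_0T; auto).
  assert (HB : 0 <= Bq) by (apply sq_ge0_0T; auto).
  assert (HZ : 0 <= Z) by (apply sq_ge0_0T; auto).
  assert (Hid : IP = (A + mu * Bq) / 2).
  { assert (E0 : RInt (fun t => ((T - t) * ut t) * zz t - / 2 * (ut t * ut t) - (mu / 2) * (UU t * UU t)) 0 T = 0).
    { rewrite (FTC (fun t => (T - t) * (ut t * ut t + mu * (UU t * UU t)) / 2)).
      rewrite ut0, UU0. Req; field.
      intros x. eapply Rd_eq. unfold Rdiv. apply (Rd_mult (fun t => (T - t) * (ut t * ut t + mu * (UU t * UU t))) (fun _ => / 2)).
      apply Rd_mult. der. apply Rd_plus. apply Rd_mult; apply Hut. apply Rd_mult. apply Rd_const.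
      apply Rd_mult; apply HUU. apply Rd_const. simpl. unfold zz. field.
      intro; cont. }
    rewrite RInt_minusC in E0 by (intro; cont). rewrite RInt_minusC in E0 by (intro; cont).
    rewrite RInt_scalC in E0 by (intro; cont). rewrite RInt_scalC in E0 by (intro; cont).
    fold A Bq IP in E0. Req. lra. }
  assert (HCS : IP ^ 2 <= RInt (fun t => ((T - t) * ut t) * ((T - t) * ut t)) 0 T * Z).
  { apply (CS (fun t => (T - t) * ut t) zz); try lra; auto. intro; cont. }
  assert (HT2 : RInt (fun t => ((T - t) * ut t) * ((T - t) * ut t)) 0 T <= T ^ 2 * A).
  { unfold A. rewrite <- RInt_scalC by (intro; cont).
    apply RInt_le. lra. apply exC; intro; cont. apply exC; intro; cont.
    intros x Hx. assert (0 <= ut x * ut x) by nra.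
    replace ((T - x) * ut x * ((T - x) * ut x)) with ((T - x) ^ 2 * (ut x * ut x)) by ring.
    apply Rmult_le_compat_r; auto. apply pow_incr. lra. }
  assert (Hkey : mu * Bq <= T ^ 2 * Z).
  { rewrite Hid in HCS.
    assert (HCS2 : ((A + mu * Bq) / 2) ^ 2 <= T ^ 2 * A * Z).
    { eapply Rle_trans. apply HCS. replace (T ^ 2 * A * Z) with ((T ^ 2 * A) * Z) by ring.
      apply Rmult_le_compat_r; auto. }
    assert (HmB : 0 <= mu * Bq) by nra.
    destruct (Req_dec A 0) as [HA0|HA0].
    - rewrite HA0 in HCS2. assert (mu * Bq = 0) by nra. assert (0 <= T ^ 2 * Z) by (apply Rmult_le_pos; auto; apply pow2_ge_0). lra.
    - assert (HAp : 0 < A) by lra.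
      assert (E1 : ((A + mu * Bq) / 2) ^ 2 = ((A - mu * Bq) / 2) ^ 2 + A * (mu * Bq)) by (Req; field).
      pose proof (pow2_ge_0 ((A - mu * Bq) / 2)).
      assert (A * (mu * Bq) <= A * (T ^ 2 * Z)).
      { replace (A * (T ^ 2 * Z)) with (T ^ 2 * A * Z) by ring. lra. }
      apply Rmult_le_reg_l with A; auto. }
  set (IZ := RInt (fun t => zz t * UU t) 0 T : R).
  assert (HP : RInt (fun t => pt t * pt t) 0 T = Z - 2 * mu * IZ + mu * mu * Bq).
  { rewrite (RInt_extR _ (fun t => (zz t * zz t - (2 * mu) * (zz t * UU t)) + (mu * mu) * (UU t * UU t))).
    2: { intros; unfold zz; ring. }
    rewrite RInt_plusC by (intro; cont). rewrite RInt_minusC by (intro; cont).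
    rewrite !RInt_scalC by (intro; cont). fold Z IZ Bq. Req; ring. }
  assert (HIZ : IZ ^ 2 <= Z * Bq) by (apply CS; auto; lra).
  rewrite HP.
  set (sZ := sqrt Z). set (sB := sqrt Bq). set (sm := sqrt mu).
  assert (EZ : sZ * sZ = Z) by (apply sqrt_sqrt; auto).
  assert (EB : sB * sB = Bq) by (apply sqrt_sqrt; auto).
  assert (Em : sm * sm = mu) by (apply sqrt_sqrt; lra).
  assert (PZ : 0 <= sZ) by apply sqrt_pos. assert (PB : 0 <= sB) by apply sqrt_pos.
  assert (Pm : 0 <= sm) by apply sqrt_pos.
  assert (G1 : Rabs IZ <= sZ * sB).
  { rewrite <- sqrt_Rsqr_abs. unfold sZ, sB. rewrite <- sqrt_mult_alt by auto. apply sqrt_le_1_alt.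
    replace (Rsqr IZ) with (IZ ^ 2) by (unfold Rsqr; ring). auto. }
  assert (G2 : sm * sB <= T * sZ).
  { apply Rsqr_incr_0_var. unfold Rsqr.
    replace (sm * sB * (sm * sB)) with ((sm * sm) * (sB * sB)) by ring.
    replace (T * sZ * (T * sZ)) with (T ^ 2 * (sZ * sZ)) by ring. rewrite Em, EB, EZ. auto.
    apply Rmult_le_pos; lra. }
  pose proof (Rle_abs IZ). pose proof (Rle_abs (- IZ)). rewrite Rabs_Ropp in *.
  rewrite <- Em. rewrite <- EZ. rewrite <- EB.
  assert (G3 : - (2 * (sm * sm) * IZ) <= 2 * (sm * sm) * (sZ * sB)).
  { assert (0 <= 2 * (sm * sm)) by nra. nra. }
  assert (G4 : (sm * sm) * (sZ * sB) <= sm * T * (sZ * sZ)).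
  { replace ((sm * sm) * (sZ * sB)) with (sm * sZ * (sm * sB)) by ring.
    replace (sm * T * (sZ * sZ)) with (sm * sZ * (T * sZ)) by ring.
    apply Rmult_le_compat_l. nra. auto. }
  assert (G5 : (sm * sm) * (sm * sm) * (sB * sB) <= (sm * T) ^ 2 * (sZ * sZ)).
  { replace ((sm * sm) * (sm * sm) * (sB * sB)) with ((sm * sm) * ((sm * sB) * (sm * sB))) by ring.
    replace ((sm * T) ^ 2 * (sZ * sZ)) with ((sm * sm) * ((T * sZ) * (T * sZ))) by ring.
    apply Rmult_le_compat_l. nra. apply Rmult_le_compat; nra. }
  replace ((1 + sm * T) ^ 2 * (sZ * sZ)) with (sZ * sZ + 2 * (sm * T * (sZ * sZ)) + (sm * T) ^ 2 * (sZ * sZ)) by ring.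
  lra.
Qed.

Lemma interp_err : RInt (fun t => (UU t - IU t) * (UU t - IU t)) 0 T <=
  mesh l eta ^ 4 / 90 * RInt (fun t => pt t * pt t) 0 T.
Proof.
  pose proof Cpt. pose proof CUU. pose proof CIU.
  rewrite <- Heta0, <- HetaT.
  rewrite (RInt_partition (fun t => (UU t - IU t) * (UU t - IU t))) by (intro; cont).
  rewrite (RInt_partition (fun t => pt t * pt t)) by (intro; cont).
  apply sum_le_K. intros i Hi. pose proof (Hstep i Hi).
  rewrite (RInt_extI _ (fun t => elerr UU (eta i) (eta (S i)) t * elerr UU (eta i) (eta (S i)) t)).
  2: { intros x Hx. rewrite Rmin_left in Hx by lra. rewrite Rmax_right in Hx by lra.
       unfold elerr, IU. rewrite (Interp_elem l eta Hstep UU i x Hi) by lra. auto. }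
  eapply Rle_trans. apply (elerr_bound pt ut UU Hut HUU Cpt). auto.
  apply Rmult_le_compat_r. apply RInt_sq_ge0; auto; lra.
  unfold Rdiv. apply Rmult_le_compat_r. lra. apply pow_incr. split. lra. apply mesh_ge; auto.
Qed.

Lemma Vh0_lin (k : R) : Vh0 T l eta (fun t => k * t).
Proof.
  split; [split|].
  - apply (C1_from_glob 0 T _ (fun _ => k)). intros x. eapply Rd_eq. der. simpl. ring.
    intro; cont.
  - intros i Hi. exists 0, k, 0. intros; ring.
  - ring.
Qed.

Lemma bform_lin (k : R) : bform T mu u (HbarT T (fun t => k * t)) =
  k * (RInt (fun t => pt t) 0 T + mu * RInt (fun t => ut t * (T - t)) 0 T).
Proof.
  pose proof Cpt. pose proof Cut.
  unfold bform, L2inner, HbarT.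
  rewrite (RInt_extI (fun t => Derive u t * Derive (fun t0 => k * T - k * t0) t) (fun t => (- k) * pt t) 0 T).
  2: { intros x Hx. rewrite Rmin_left in Hx by lra. rewrite Rmax_right in Hx by lra.
       rewrite K3 by lra. rewrite (is_derive_unique _ _ (0 - (0 * x + k * 1))). ring.
       apply Rd_minus. apply Rd_const. apply Rd_mult_c. }
  rewrite (RInt_extI (fun t => u t * (k * T - k * t)) (fun t => k * (ut t * (T - t))) 0 T).
  2: { intros x Hx. rewrite Rmin_left in Hx by lra. rewrite Rmax_right in Hx by lra.
       rewrite K2 by lra. ring. }
  rewrite !RInt_scalC by (intro; cont). change (RInt (fun t => pt t) 0 T) with (RInt pt 0 T). Req; ring.
Qed.

Lemma H1_lin (k : R) : H1semi T (fun t => k * t) = sqrt (k * k * T).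
Proof.
  unfold H1semi, L2inner. f_equal.
  rewrite (RInt_extR _ (fun _ => k * k)).
  2: { intros x. rewrite (is_derive_unique _ _ (0 * x + k * 1)). ring. apply Rd_mult_c. }
  rewrite RInt_const. unfold scal; simpl. unfold mult; simpl. ring.
Qed.

Lemma lin_in (k : R) : k <> 0 -> infsup_quotients T mu l eta u
  (k * (RInt (fun t => pt t) 0 T + mu * RInt (fun t => ut t * (T - t)) 0 T) / sqrt (k * k * T)).
Proof.
  intros Hk. exists (fun t => k * t). split. apply Vh0_lin. split.
  - exists T. split. lra. intro H. apply Rmult_integral in H. lra.
  - rewrite bform_lin, H1_lin. reflexivity.
Qed.

Lemma main_sec (Hmesh : mesh l eta <= PI ^ 2 / (sqrt 2 * (2 + sqrt mu * T) * mu * T)) :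
  Rbar_le
      (Finite (2 * PI ^ 2 / ((2 + sqrt mu * T) ^ 2 * (PI ^ 2 + 4 * mu * T ^ 2))
                 * H1semi T u))
      (Lub_Rbar (infsup_quotients T mu l eta u)).
Proof.
  pose proof Cpt. pose proof Cut. pose proof CUU. pose proof Czz. pose proof Cww. pose proof CIU.
  set (S := infsup_quotients T mu l eta u).
  assert (Hub : forall q, S q -> Rbar_le (Finite q) (Lub_Rbar S)).
  { intros q Hq. apply (proj1 (Lub_Rbar_correct S)). auto. }
  set (c := 2 * PI ^ 2 / ((2 + sqrt mu * T) ^ 2 * (PI ^ 2 + 4 * mu * T ^ 2))).
  set (s := sqrt mu * T).
  assert (Hs0 : 0 <= s) by (unfold s; apply Rmult_le_pos; [apply sqrt_pos|lra]).
  assert (Hsm : s ^ 2 = mu * T ^ 2).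
  { unfold s. rewrite Rpow_mult_distr. rewrite pow2_sqrt by lra. auto. }
  pose proof PI_RGT_0 as Hpi.
  assert (Hpi2 : 0 < PI ^ 2) by (apply pow_lt; lra).
  assert (Hc0 : 0 < c).
  { unfold c. apply Rdiv_lt_0_compat. lra. apply Rmult_lt_0_compat. apply pow_lt; pose proof (sqrt_pos mu); nra.
    assert (0 <= mu * T ^ 2) by (apply Rmult_le_pos; [lra|apply pow2_ge_0]). lra. }
  assert (Hc1 : c <= 2 / (2 + s) ^ 2).
  { unfold c. fold s.
    assert (0 < (2 + s) ^ 2) by (apply pow_lt; lra).
    assert (0 <= mu * T ^ 2) by (apply Rmult_le_pos; [lra|apply pow2_ge_0]).
    unfold Rdiv. rewrite Rinv_mult. 
    replace (2 * PI ^ 2 * (/ (2 + s) ^ 2 * / (PI ^ 2 + 4 * mu * T ^ 2))) with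
       (2 * / (2 + s) ^ 2 * (PI ^ 2 / (PI ^ 2 + 4 * mu * T ^ 2))) by (field; lra).
    rewrite <- (Rmult_1_r (2 * / (2 + s) ^ 2)) at 2.
    apply Rmult_le_compat_l. apply Rmult_le_pos. lra. left; apply Rinv_0_lt_compat; auto.
    apply Rmult_le_reg_r with (PI ^ 2 + 4 * mu * T ^ 2). lra.
    unfold Rdiv. rewrite Rmult_assoc, Rinv_l by lra. lra. }
  rewrite H1_u.
  set (P := RInt (fun t => pt t * pt t) 0 T : R).
  assert (HP0 : 0 <= P) by (apply sq_ge0_0T; auto).
  destruct (Req_dec P 0) as [HP|HP].
  -
    rewrite HP, sqrt_0, Rmult_0_r.
    set (Q := RInt (fun t => pt t) 0 T + mu * RInt (fun t => ut t * (T - t)) 0 T : R).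
    destruct (Rle_dec 0 Q) as [HQ|HQ].
    + apply (Rbar_le_trans _ (Finite (1 * Q / sqrt (1 * 1 * T)))).
      * simpl. apply Rdiv_le_0_compat. lra. apply sqrt_lt_R0. lra.
      * apply Hub. apply lin_in. lra.
    + apply (Rbar_le_trans _ (Finite (-1 * Q / sqrt (-1 * -1 * T)))).
      * simpl. apply Rdiv_le_0_compat. lra. apply sqrt_lt_R0. lra.
      * apply Hub. apply lin_in. lra.
  - assert (HPp : 0 < P) by lra.
    set (Z := RInt (fun t => zz t * zz t) 0 T : R).
    set (Wn := RInt (fun t => ww t * ww t) 0 T : R).
    set (a := RInt (fun t => ww t * zz t) 0 T : R).
    set (E := RInt (fun t => (zz t - ww t) * (zz t - ww t)) 0 T : R).
    assert (HZ : 0 <= Z) by (apply sq_ge0_0T; auto).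
    assert (HW : 0 <= Wn) by (apply sq_ge0_0T; auto).
    assert (HE : E = Z - 2 * a + Wn).
    { unfold E. rewrite (RInt_extR _ (fun t => (zz t * zz t - 2 * (ww t * zz t)) + ww t * ww t)).
      2: { intros; ring. }
      rewrite RInt_plusC by (intro; cont). rewrite RInt_minusC by (intro; cont).
      rewrite RInt_scalC by (intro; cont). fold Z a Wn. Req; ring. }
    assert (HE2 : E <= mu ^ 2 * (mesh l eta ^ 4 / 90 * P)).
    { unfold E. rewrite (RInt_extR _ (fun t => mu ^ 2 * ((UU t - IU t) * (UU t - IU t)))).
      2: { intros; unfold zz, ww; ring. }
      rewrite RInt_scalC by (intro; cont). apply Rmult_le_compat_l. apply pow2_ge_0.
      apply interp_err. }
    assert (Hst : P <= (1 + s) ^ 2 * Z) by apply stab.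
    assert (Hpart : is_partition T l eta) by (split; [auto|split; auto]).
    assert (HmT : mesh l eta <= T) by (apply mesh_le_T; auto).
    assert (Hm0 : 0 <= mesh l eta).
    { pose proof (mesh_ge l eta 0 ltac:(lia)). pose proof (Hstep 0 ltac:(lia)). lra. }
    set (y := mu * mesh l eta ^ 2).
    assert (Hy0 : 0 <= y) by (unfold y; apply Rmult_le_pos; [lra|apply pow2_ge_0]).
    assert (Hy1 : y <= s ^ 2).
    { rewrite Hsm. unfold y. apply Rmult_le_compat_l. lra. apply pow_incr. lra. }
    assert (Hy2 : y * s ^ 2 <= PI ^ 4 / (2 * (2 + s) ^ 2)).
    { rewrite Hsm.
      assert (Hb : mu * mesh l eta * T <= PI ^ 2 / (sqrt 2 * (2 + s))).
      { fold s in Hmesh. apply Rmult_le_compat_l with (r := mu * T) in Hmesh.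
        2: { apply Rmult_le_pos; lra. }
        replace (mu * mesh l eta * T) with (mu * T * mesh l eta) by ring.
        eapply Rle_trans. apply Hmesh. right. field.
        assert (0 < sqrt 2) by (apply sqrt_lt_R0; lra). split; [lra|split; lra]. }
      assert (Hb0 : 0 <= mu * mesh l eta * T) by (apply Rmult_le_pos; [apply Rmult_le_pos|]; lra).
      replace (y * (mu * T ^ 2)) with ((mu * mesh l eta * T) ^ 2) by (unfold y; ring).
      eapply Rle_trans. apply pow_incr. split. auto. apply Hb.
      right. unfold Rdiv. rewrite Rpow_mult_distr. rewrite pow_inv.
      rewrite Rpow_mult_distr. rewrite pow2_sqrt by lra.
      replace (PI ^ 4) with ((PI ^ 2) ^ 2) by ring. field.
      assert (0 < 2 + s) by lra. repeat split; lra. }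
    pose proof (FA s y Hs0 Hy0 Hy1 Hy2) as HFA.
    assert (Hc2 : c ^ 2 <= 4 / (2 + s) ^ 4).
    { eapply Rle_trans. apply pow_incr. split. lra. apply Hc1. right. field. lra. }
    assert (Hkey : c ^ 2 * P <= Z - E).
    { assert (HA : c ^ 2 * P <= (1 / (1 + s) ^ 2 - y ^ 2 / 90) * P).
      { apply Rmult_le_compat_r; lra. }
      assert (HB : P / (1 + s) ^ 2 <= Z).
      { apply Rmult_le_reg_r with ((1 + s) ^ 2). apply pow_lt; lra.
        replace (P / (1 + s) ^ 2 * (1 + s) ^ 2) with P by (field; lra). lra. }
      assert (HC : y ^ 2 / 90 * P = mu ^ 2 * (mesh l eta ^ 4 / 90 * P)) by (unfold y; field).
      replace ((1 / (1 + s) ^ 2 - y ^ 2 / 90) * P) with (P / (1 + s) ^ 2 - y ^ 2 / 90 * P) in HA by (field; lra).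
      lra. }
    assert (HcP : 0 < c ^ 2 * P) by (apply Rmult_lt_0_compat; [apply pow_lt|]; lra).
    assert (Hcs : a ^ 2 <= Wn * Z) by (apply (CS ww zz); auto; lra).
    assert (HWp : 0 < Wn).
    { destruct (Req_dec Wn 0) as [HW0|HW0]; [|lra].
      exfalso. rewrite HW0, Rmult_0_l in Hcs. assert (a = 0) by nra. lra. }
    set (q := a / sqrt Wn).
    assert (Hq : S q).
    { exists vv. split. apply Vh0_vv. split. apply vv_nonzero. auto.
      unfold q. rewrite bform_eq, H1_vv. reflexivity. }
    eapply Rbar_le_trans. 2: apply Hub, Hq. simpl.
    set (r := sqrt (Z - E)). set (w := sqrt Wn).
    assert (Hr : r * r = Z - E) by (apply sqrt_sqrt; lra).
    assert (Hw : w * w = Wn) by (apply sqrt_sqrt; lra).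
    assert (Hr0 : 0 <= r) by apply sqrt_pos.
    assert (Hw0 : 0 < w) by (apply sqrt_lt_R0; auto).
    assert (Hcr : c * sqrt P <= r).
    { unfold r. rewrite <- (sqrt_pow2 c) by lra. rewrite <- sqrt_mult_alt by (apply pow2_ge_0).
      apply sqrt_le_1_alt. auto. }
    assert (Hra : r <= a / w).
    { apply Rmult_le_reg_r with w; auto. replace (a / w * w) with a by (field; lra).
      assert (a = (r * r + w * w) / 2) by lra. pose proof (pow2_ge_0 (r - w)). assert ((r - w) ^ 2 = r * r + w * w - 2 * (r * w)) by ring. lra. }
    unfold q. fold w. lra.
Qed.

End Main.


Theorem mainTheorem5 (T mu : R) (l : nat) (eta : nat -> R) :
  0 < T -> 0 < mu -> is_partition T l eta ->
  mesh l eta <= PI ^ 2 / (sqrt 2 * (2 + sqrt mu * T) * mu * T) ->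
  forall u : R -> R, Vh0 T l eta u ->
    Rbar_le
      (Finite (2 * PI ^ 2 / ((2 + sqrt mu * T) ^ 2 * (PI ^ 2 + 4 * mu * T ^ 2))
                 * H1semi T u))
      (Lub_Rbar (infsup_quotients T mu l eta u)).
Proof.
  intros HT Hmu [H0 [HTl Hs]] Hmesh u [[[dv [Hd Hc]] Hpq] Hu0].
  eapply (main_sec T mu l eta u dv); eauto.

Qed.
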